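(* In the persuasion setting of the context, if the channel capacity is zero, $C(Q)=0$, then for all positive integers $k,n$, $$U^*_S(\mu^n,Q^k)=V\Big(\mu,\tfrac{k}{n}C(Q)\Big)=u^*_S(\mu).$$
   Context: For a finite set $S$, $\Delta(S)$ denotes the set of probability distributions on $S$. Let $\Omega$ be a finite set of states with prior $\mu\in\Delta(\Omega)$, $A$ a finite set of actions, $u_S,u_R:\Omega\times A\to\mathbb{R}$ payoffs of sender and receiver. A channel $(X,Y,Q)$: finite sets $X,Y$ and $Q:X\to\Delta(Y)$. For positive integers $n,k$: a sender strategy is $\sigma:\Omega^n\to\Delta(X^k)$; $\omega^n$ drawn i.i.d. from $\mu$ ($\mu^n(\omega^n)=\prod_t\mu(\omega_t)$), $x^k$ with probability $\sigma(x^k|\omega^n)$, $y^k$ with probability $Q^k(y^k|x^k)=\prod_tQ(y_t|x_t)$, observed by the receiver; a receiver strategy is $\tau:Y^k\to A^n$. Payoffs $\bar u_i(\omega^n,a^n)=\frac1n\sum_tu_i(\omega_t,a_t)$. $BR(\sigma)$: strategies $\tau$ such that for each $y^k$, $\tau(y^k)$ maximizes $\sum_{\omega^n,x^k}\mu^n(\omega^n)\sigma(x^k|\omega^n)Q^k(y^k|x^k)\bar u_R(\omega^n,a^n)$ over $a^n$. $U^*_S(\mu^n,Q^k)=\sup_\sigma\min_{\tau\in BR(\sigma)}\sum_{\omega^n,x^k,y^k}\mu^n(\omega^n)\sigma(x^k|\omega^n)Q^k(y^k|x^k)\bar u_S(\omega^n,\tau(y^k))$. $A^*(\nu)=\arg\max_a\sum_\omega\nu(\omega)u_R(\omega,a)$,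 $u^*_S(\nu)=\min_{a\in A^*(\nu)}\sum_\omega\nu(\omega)u_S(\omega,a)$. $H(q)=-\sum_sq(s)\log_2q(s)$. Capacity $C(Q)=\max_{p\in\Delta(X)}\big[H(\sum_xp(x)Q(\cdot|x))-\sum_xp(x)H(Q(\cdot|x))\big]$. A splitting of $\mu$: finite family $(\lambda_m,\nu_m)_m$, $\nu_m\in\Delta(\Omega)$, $\lambda_m\ge0$, $\sum\lambda_m=1$, $\sum\lambda_m\nu_m=\mu$. $V(\mu,c)=\sup\{\sum_m\lambda_mu^*_S(\nu_m):\text{splitting of }\mu,\ H(\mu)-\sum_m\lambda_mH(\nu_m)\le c\}$. *)

(* Defs.v *)
From mathcomp Require Import all_boot all_order all_algebra.
From mathcomp Require Import all_classical all_reals all_analysis.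
Set Implicit Arguments. Unset Strict Implicit. Unset Printing Implicit Defensive.
Import Order.TTheory GRing.Theory Num.Theory.
Local Open Scope classical_set_scope.
Local Open Scope ring_scope.

Section Defs.
Variable R : realType.

Definition is_dist (T : finType) (p : T -> R) : Prop :=
  (forall t, 0 <= p t) /\ \sum_(t : T) p t = 1.

Definition log2 (x : R) : R := ln x / ln 2.
Definition entropy (T : finType) (q : T -> R) : R :=
  - \sum_(s : T) (if q s == 0 then 0 else q s * log2 (q s)).

Definition capacity (X Y : finType) (Q : X -> Y -> R) : R :=
  sup [set v | exists p : X -> R, is_dist p /\
     v = entropy (fun y => \sum_(x : X) p x * Q x y)
         - \sum_(x : X) p x * entropy (Q x)].

Variables (Om A : finType) (uS uR : Om -> A -> R).

Definition expu (u : Om -> A -> R) (nu : Om -> R) (a : A) : R :=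
  \sum_(w : Om) nu w * u w a.
Definition Astar (nu : Om -> R) (a : A) : Prop :=
  forall a' : A, expu uR nu a' <= expu uR nu a.
Definition uSstar (nu : Om -> R) : R :=
  inf [set v | exists a, Astar nu a /\ v = expu uS nu a].

Definition is_splitting (mu : Om -> R) (m : nat) (lam : 'I_m -> R)
    (nu : 'I_m -> Om -> R) : Prop :=
  (forall i, 0 <= lam i) /\ \sum_(i < m) lam i = 1 /\
  (forall i, is_dist (nu i)) /\
  (forall w, \sum_(i < m) lam i * nu i w = mu w).

Definition Vval (mu : Om -> R) (c : R) : R :=
  sup [set v | exists m (lam : 'I_m -> R) (nu : 'I_m -> Om -> R),
     is_splitting mu lam nu /\
     entropy mu - \sum_(i < m) lam i * entropy (nu i) <= c /\
     v = \sum_(i < m) lam i * uSstar (nu i)].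

(* n uses of the source, k uses of the channel *)
Variables (X Y : finType) (Q : X -> Y -> R) (mu : Om -> R) (n k : nat).

Definition mun (w : {ffun 'I_n -> Om}) : R := \prod_(t < n) mu (w t).
Definition Qk (x : {ffun 'I_k -> X}) (y : {ffun 'I_k -> Y}) : R :=
  \prod_(t < k) Q (x t) (y t).
Definition ubar (u : Om -> A -> R) (w : {ffun 'I_n -> Om})
    (a : {ffun 'I_n -> A}) : R :=
  n%:R^-1 * \sum_(t < n) u (w t) (a t).

Definition sender_strategy
    (sigma : {ffun 'I_n -> Om} -> {ffun 'I_k -> X} -> R) : Prop :=
  forall w, is_dist (sigma w).

(* receiver's (unnormalized) expected payoff of a^n after observing y^k *)
Definition recv_obj (sigma : {ffun 'I_n -> Om} -> {ffun 'I_k -> X} -> R)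
    (y : {ffun 'I_k -> Y}) (a : {ffun 'I_n -> A}) : R :=
  \sum_(w : {ffun 'I_n -> Om}) \sum_(x : {ffun 'I_k -> X})
     mun w * sigma w x * Qk x y * ubar uR w a.

Definition BR (sigma : {ffun 'I_n -> Om} -> {ffun 'I_k -> X} -> R)
    (tau : {ffun 'I_k -> Y} -> {ffun 'I_n -> A}) : Prop :=
  forall y a', recv_obj sigma y a' <= recv_obj sigma y (tau y).

Definition sender_payoff (sigma : {ffun 'I_n -> Om} -> {ffun 'I_k -> X} -> R)
    (tau : {ffun 'I_k -> Y} -> {ffun 'I_n -> A}) : R :=
  \sum_(w : {ffun 'I_n -> Om}) \sum_(x : {ffun 'I_k -> X})
    \sum_(y : {ffun 'I_k -> Y}) mun w * sigma w x * Qk x y * ubar uS w (tau y).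

Definition UstarS : R :=
  sup [set v | exists sigma, sender_strategy sigma /\
     v = inf [set z | exists tau, BR sigma tau /\ z = sender_payoff sigma tau]].

End Defs.

(* Main.v *)
Require Import Defs.
From mathcomp Require Import all_boot all_order all_algebra.
From mathcomp Require Import all_classical all_reals all_analysis.
From mathcomp Require Import ring lra.
Import Order.TTheory GRing.Theory Num.Theory.
Local Open Scope ring_scope.

Module Helpers.
Set Implicit Arguments. Unset Strict Implicit.
Local Open Scope classical_set_scope.
Local Open Scope ring_scope.
Section Anal.
Variable R : realType.
Definition Fl (t : R) : R := if t == 0 then 0 else t * ln t.

Lemma ln_lt_sub1 (x : R) : 0 < x -> x != 1 -> ln x < x - 1.
Proof.
move=> x0 x1.
have hl : ln x != 0.
  apply: contra x1 => /eqP h.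
  by rewrite -[x](lnK (x:=x)) ?posrE // h expR0.
have := expR_gt1Dx hl; rewrite lnK ?posrE // => h.
by rewrite ltrBrDr addrC.
Qed.

Lemma D_gt0 (M t : R) : 0 < M -> 0 <= t -> t != M ->
  0 < Fl t - Fl M - (ln M + 1) * (t - M).
Proof.
move=> M0 t0 tM.
rewrite /Fl (gt_eqF M0).
have [->|tn0] := eqVneq t 0.
  rewrite ?eqxx; set L := ln M.
  have -> : 0 - M * L - (L + 1) * (0 - M) = M by ring.
  exact: M0.
rewrite ?(negbTE tn0).
have tp : 0 < t by rewrite lt_neqAle eq_sym tn0 t0.
have h := @ln_lt_sub1 (M / t) (divr_gt0 M0 tp).
have hMt : M / t != 1.
  apply: contra tM => /eqP e; apply/eqP.
  by have := e; move/(congr1 (fun z => z * t)); rewrite mulfVK ?(gt_eqF tp) // mul1r => ->.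
have {h} h := h hMt.
rewrite ln_div ?posrE // in h.
have h2 : t * (ln M - ln t) < t * (M / t - 1) by rewrite ltr_pM2l.
have e : t * (M / t - 1) = M - t by rewrite mulrBr mulrCA mulfV ?(gt_eqF tp) // mulr1 mulr1.
rewrite e in h2.
set L := ln M in h2 *; set K := ln t in h2 *.
have -> : t * K - M * L - (L + 1) * (t - M) = (M - t) - t * (L - K) by ring.
by rewrite subr_gt0.
Qed.

Lemma D_ge0 (M t : R) : 0 < M -> 0 <= t ->
  0 <= Fl t - Fl M - (ln M + 1) * (t - M).
Proof.
move=> M0 t0; have [->|tM] := eqVneq t M.
  by rewrite !subrr mulr0 subr0.
by by apply/ltW; apply: D_gt0.
Qed.

Lemma Fl_ge (t : R) : 0 <= t -> t - 1 <= Fl t.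
Proof.
move=> t0; have := @D_ge0 1 t ltr01 t0.
by rewrite /Fl oner_eq0 ln1 mulr0 add0r mul1r subr0 subr_ge0.
Qed.

Lemma Fl_le0 (t : R) : 0 <= t -> t <= 1 -> Fl t <= 0.
Proof.
move=> t0 t1; rewrite /Fl; case: eqP => // tn0.
have tp : 0 < t by rewrite lt_neqAle eq_sym t0 andbT; apply/eqP.
rewrite pmulr_rle0 //.
have [->|t1'] := eqVneq t 1; first by rewrite ln1.
by apply: ltW; apply: lt_le_trans (@ln_lt_sub1 t tp t1') _; rewrite subr_le0.
Qed.

Lemma jensen (I : finType) (lam t : I -> R) :
  (forall i, 0 <= lam i) -> \sum_i lam i = 1 -> (forall i, 0 <= t i) ->
  Fl (\sum_i lam i * t i) <= \sum_i lam i * Fl (t i) /\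
  (\sum_i lam i * Fl (t i) <= Fl (\sum_i lam i * t i) ->
     forall i, lam i != 0 -> t i = \sum_i lam i * t i).
Proof.
move=> l0 l1 t0; set M := \sum_i lam i * t i.
have M0 : 0 <= M by apply: sumr_ge0 => i _; apply: mulr_ge0.
have [Me|Mn0] := eqVneq M 0.
  have hz := psumr_eq0P (P := predT) (fun i _ => mulr_ge0 (l0 i) (t0 i)) Me.
  have ti0 : forall i, lam i != 0 -> t i = 0.
    by move=> i li; have := hz i isT => /eqP; rewrite mulf_eq0 (negbTE li) /= => /eqP.
  have S0 : \sum_i lam i * Fl (t i) = 0.
    apply: big1 => i _; have [->|li] := eqVneq (lam i) 0; first by rewrite mul0r.
    by rewrite ti0 // /Fl eqxx mulr0.
  rewrite S0 Me /Fl eqxx; split => // _ i li; exact: ti0.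
have Mp : 0 < M by rewrite lt_neqAle eq_sym Mn0.
set D := fun i => Fl (t i) - Fl M - (ln M + 1) * (t i - M).
have SD : \sum_i lam i * D i = \sum_i lam i * Fl (t i) - Fl M.
  rewrite /D.
  have -> : \sum_i lam i * (Fl (t i) - Fl M - (ln M + 1) * (t i - M)) =
     \sum_i lam i * Fl (t i) - (\sum_i lam i) * Fl M
     - (ln M + 1) * (\sum_i lam i * t i - (\sum_i lam i) * M).
    rewrite !mulr_suml -[X in _ * X]sumrB mulr_sumr -!sumrB; apply: eq_bigr => i _; ring.
  by rewrite l1 !mul1r -/M subrr mulr0 subr0.
have D0 : forall i, 0 <= lam i * D i by move=> i; apply: mulr_ge0 => //; apply: D_ge0.
have SD0 : 0 <= \sum_i lam i * D i by apply: sumr_ge0.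
split; first by rewrite -subr_ge0 -SD.
move=> hle i li.
have SDe : \sum_i lam i * D i = 0.
  by apply/eqP; rewrite eq_le SD0 andbT SD subr_le0.
have hz := psumr_eq0P (P := predT) (fun i _ => D0 i) SDe.
have := hz i isT.
move/eqP; rewrite mulf_eq0 (negbTE li) /= => /eqP Di.
apply/eqP; apply: contraT => tM.
by have := @D_gt0 M (t i) Mp (t0 i) tM; rewrite -/(D i) Di ltxx.
Qed.

End Anal.
Arguments Fl {R} t.

Section B.
Variable R : realType.

Lemma ln2_gt0 : 0 < ln (2 : R).
Proof. by apply: ln_gt0; rewrite ltr1n. Qed.

Lemma entropyE (T : finType) (q : T -> R) :
  entropy q = - (\sum_s Fl (q s)) / ln 2.
Proof.
rewrite /entropy /log2 /Fl mulNr mulr_suml; congr (- _); apply: eq_bigr => s _.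
by case: eqP => _; rewrite ?mul0r // mulrA.
Qed.

Lemma dist_le1 (T : finType) (q : T -> R) t : is_dist q -> q t <= 1.
Proof.
case=> q0 q1; rewrite -q1 (bigD1 t) //= lerDl; exact: sumr_ge0.
Qed.

Lemma MIE (X Y : finType) (Q : X -> Y -> R) (p : X -> R) :
  entropy (fun y => \sum_(x : X) p x * Q x y) - \sum_(x : X) p x * entropy (Q x)
  = (\sum_y (\sum_x p x * Fl (Q x y) - Fl (\sum_x p x * Q x y))) / ln 2.
Proof.
rewrite entropyE.
have -> : \sum_x p x * entropy (Q x) = \sum_x p x * (- (\sum_y Fl (Q x y)) / ln 2) by apply: eq_bigr => x _; rewrite entropyE.
rewrite sumrB exchange_big /= mulrBl addrC; congr (_ + _); last by rewrite mulNr.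
rewrite mulr_suml -sumrN; apply: eq_bigr => x _.
rewrite mulNr mulrN opprK mulrA mulr_sumr mulr_suml.
by apply: eq_bigr => y _.
Qed.

Lemma sum_ind (T : finType) (t0 : T) :
  \sum_(t : T) ((t == t0)%:R : R) = 1.
Proof. by rewrite (bigD1 t0) //= eqxx big1 ?addr0 // => t /negbTE ->. Qed.

Lemma chan_const (X Y : finType) (Q : X -> Y -> R) :
  (forall x, is_dist (Q x)) -> capacity Q = 0 ->
  forall x1 x2 y, Q x1 y = Q x2 y.
Proof.
move=> hQ hC x1 x2 y.
set S := [set v | exists p : X -> R, is_dist p /\
     v = entropy (fun y => \sum_(x : X) p x * Q x y)
         - \sum_(x : X) p x * entropy (Q x)].
have hS : S = [set v | exists p : X -> R, is_dist p /\
     v = (\sum_y (\sum_x p x * Fl (Q x y) - Fl (\sum_x p x * Q x y))) / ln 2].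
  rewrite /S; apply/seteqP; split => v [p [hp ->]]; exists p; split => //;
  by rewrite MIE.
have l2 := ln2_gt0.
have hsup : has_sup S.
  split.
    exists (entropy (fun y => \sum_(x : X) ((x == x1)%:R : R) * Q x y)
         - \sum_(x : X) ((x == x1)%:R : R) * entropy (Q x)).
    exists (fun x => ((x == x1)%:R : R)); split => //; split.
      by move=> x; rewrite ler0n.
    exact: sum_ind.
  exists ((\sum_(y : Y) (1 : R)) / ln 2); rewrite hS => v [p [[p0 p1] ->]].
  rewrite ler_pM2r ?invr_gt0 //; apply: ler_sum => y' _.
  have m0 : 0 <= \sum_x p x * Q x y'.
    by apply: sumr_ge0 => x _; apply: mulr_ge0 => //; case: (hQ x).
  have h1 : \sum_x p x * Fl (Q x y') <= 0.
    apply: sumr_le0 => x _; apply: mulr_ge0_le0 => //.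
    by apply: Fl_le0; [case: (hQ x) | apply: dist_le1].
  have h2 := Fl_ge m0.
  lra.
set p := fun x : X => ((x == x1)%:R : R) / 2 + ((x == x2)%:R : R) / 2.
have p0 : forall x, 0 <= p x.
  by move=> x; rewrite /p; apply: addr_ge0; apply: divr_ge0 => //; rewrite ler0n.
have p1 : \sum_x p x = 1.
  rewrite /p big_split /= -!mulr_suml !sum_ind; lra.
have vS : S (entropy (fun y => \sum_(x : X) p x * Q x y)
         - \sum_(x : X) p x * entropy (Q x)).
  rewrite /S /=. by exists p.
have := sup_upper_bound hsup vS; rewrite -/S.
rewrite /capacity in hC; rewrite hC MIE pmulr_lle0 ?invr_gt0 // => hle.
have tge0 : forall y', 0 <= \sum_x p x * Fl (Q x y') - Fl (\sum_x p x * Q x y').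
  move=> y'; rewrite subr_ge0.
  by case: (jensen (t := fun x => Q x y') p0 p1 (fun x => (proj1 (hQ x)) y')).
have hz := psumr_eq0P (P := predT) (fun y' _ => tge0 y') _.
have heq : \sum_y (\sum_x p x * Fl (Q x y) - Fl (\sum_x p x * Q x y)) = 0.
  by apply/eqP; rewrite eq_le hle /=; apply: sumr_ge0 => y' _.
have := hz heq y isT; move/eqP; rewrite subr_eq0 => /eqP he.
have [_ J] := jensen (t := fun x => Q x y) p0 p1 (fun x => (proj1 (hQ x)) y).
have hp : forall x, x = x1 \/ x = x2 -> p x != 0.
  move=> x hx; rewrite gt_eqF // /p.
  have h1 := ler0n R (x2 == x1); have h2 := ler0n R (x1 == x2).
  by case: hx => ->; rewrite eqxx /=; lra.
rewrite he lexx in J.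
by rewrite (J isT x1 (hp x1 (or_introl erefl))) (J isT x2 (hp x2 (or_intror erefl))).
Qed.

Lemma jensen_eq (I T : finType) (lam : I -> R) (nu : I -> T -> R) :
  (forall i, 0 <= lam i) -> \sum_i lam i = 1 -> (forall i w, 0 <= nu i w) ->
  (\sum_w (\sum_i lam i * Fl (nu i w) - Fl (\sum_i lam i * nu i w))) / ln 2 <= 0 ->
  forall i w, lam i != 0 -> nu i w = \sum_i lam i * nu i w.
Proof.
move=> l0 l1 n0 hle i w li.
have l2 := ln2_gt0.
rewrite pmulr_lle0 ?invr_gt0 // in hle.
have tge0 : forall w', 0 <= \sum_i lam i * Fl (nu i w') - Fl (\sum_i lam i * nu i w').
  move=> w'; rewrite subr_ge0.
  by case: (jensen (t := fun i => nu i w') l0 l1 (fun i => n0 i w')).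
have hz := psumr_eq0P (P := predT) (fun w' _ => tge0 w') _.
have heq : \sum_w (\sum_i lam i * Fl (nu i w) - Fl (\sum_i lam i * nu i w)) = 0.
  by apply/eqP; rewrite eq_le hle /=; apply: sumr_ge0 => w' _.
have := hz heq w isT; move/eqP; rewrite subr_eq0 => /eqP he.
have [_ J] := jensen (t := fun i => nu i w) l0 l1 (fun i => n0 i w).
rewrite he lexx in J.
exact: J.
Qed.

Lemma V_eq (Om A : finType) (uS uR : Om -> A -> R) (mu : Om -> R) :
  is_dist mu -> Vval uS uR mu 0 = uSstar uS uR mu.
Proof.
move=> hmu; rewrite /Vval.
set u := uSstar uS uR mu.
rewrite [X in sup X](_ : _ = [set u]) ?sup1 //.
apply/seteqP; split => v /=.
  move=> [m [lam [nu [[l0 [l1 [nd nsum]]] [hinfo ->]]]]].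
  have e : (fun w => \sum_i lam i * nu i w) = mu by apply: funext => w; exact: nsum.
  rewrite -e MIE in hinfo.
  have J := jensen_eq l0 l1 (fun i w => (proj1 (nd i)) w) hinfo.
  have -> : \sum_(i < m) lam i * uSstar uS uR (nu i) = \sum_(i < m) lam i * u.
    apply: eq_bigr => i _; have [->|li] := eqVneq (lam i) 0; first by rewrite !mul0r.
    congr (_ * _); rewrite /u; congr (uSstar uS uR _); apply: funext => w.
    by rewrite (J i w li) nsum.
  by rewrite -mulr_suml l1 mul1r.
move=> ->; exists 1%N, (fun _ => 1), (fun _ => mu); split.
  split; first by move=> _; exact: ler01.
  split; first by rewrite big_ord1.
  split; first by move=> _.
  by move=> w; rewrite big_ord1 mul1r.
by split; rewrite big_ord1 mul1r ?subrr.
Qed.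

End B.

Section C.
Variable R : realType.

Lemma prod_marg (Om : finType) (n : nat) (mu : Om -> R) (s : 'I_n) (g : Om -> R) :
  \sum_o mu o = 1 ->
  \sum_(w : {ffun 'I_n -> Om}) mun mu w * g (w s) = \sum_o mu o * g o.
Proof.
move=> h1.
pose F := fun (t : 'I_n) (o : Om) => if t == s then mu o * g o else mu o.
have -> : \sum_(w : {ffun 'I_n -> Om}) mun mu w * g (w s) =
          \sum_(w : {ffun 'I_n -> Om}) \prod_t F t (w t).
  apply: eq_bigr => w _; rewrite /mun (bigD1 s) //= [RHS](bigD1 s) //= /F eqxx.
  rewrite mulrAC; congr (_ * _); apply: eq_bigr => t /negbTE -> //.
rewrite -bigA_distr_bigA /= (bigD1 s) //= [X in _ * X]big1 ?mulr1.
  by rewrite /F eqxx.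
by move=> t /negbTE hts; rewrite /F hts.
Qed.

Lemma sum_prod (T : finType) (n : nat) (q : T -> R) :
  \sum_o q o = 1 -> \sum_(w : {ffun 'I_n -> T}) \prod_t q (w t) = 1.
Proof.
move=> h1; rewrite -(bigA_distr_bigA (fun (t : 'I_n) o => q o)) /=.
by rewrite big1 // => t _.
Qed.

Lemma inf_min (S : set R) x : S x -> (forall y, S y -> x <= y) -> inf S = x.
Proof.
move=> Sx lb; apply/eqP; rewrite eq_le; apply/andP; split.
  by apply: (ge_inf (E := S)) => //; exists x.
by apply: lb_le_inf => //; exists x.
Qed.

Variables (Om A X Y : finType) (uS uR : Om -> A -> R) (Q : X -> Y -> R)
  (mu : Om -> R) (n k : nat) (x0 : X) (a0 : A).
Hypotheses (hmu : is_dist mu) (hQ : forall x, is_dist (Q x))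
  (hconst : forall x1 x2 y, Q x1 y = Q x2 y) (hn : (0 < n)%N).

Definition qk (y : {ffun 'I_k -> Y}) : R := \prod_t Q x0 (y t).
Definition G (u : Om -> A -> R) (a : {ffun 'I_n -> A}) : R :=
  \sum_(w : {ffun 'I_n -> Om}) mun mu w * ubar u w a.

Lemma QkE x y : Qk Q x y = qk y.
Proof. by apply: eq_bigr => t _; rewrite (hconst _ x0). Qed.

Lemma qk_ge0 y : 0 <= qk y.
Proof. by apply: prodr_ge0 => t _; case: (hQ x0). Qed.

Lemma sum_qk : \sum_y qk y = 1.
Proof. by apply: sum_prod; case: (hQ x0). Qed.

Lemma GE u a : G u a = n%:R^-1 * \sum_(t < n) expu u mu (a t).
Proof.
rewrite /G /ubar.
under eq_bigr do rewrite mulrCA mulr_sumr.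
rewrite -mulr_sumr exchange_big /=; congr (_ * _).
apply: eq_bigr => t _.
have := prod_marg t (fun o => u o (a t)) (proj2 hmu); rewrite /expu => <-.
done.
Qed.

Lemma recvE sigma y a : sender_strategy sigma ->
  recv_obj uR Q mu sigma y a = qk y * G uR a.
Proof.
move=> hs; rewrite /recv_obj /G mulr_sumr; apply: eq_bigr => w _.
under eq_bigr do rewrite QkE.
have -> : \sum_x mun mu w * sigma w x * qk y * ubar uR w a =
          (\sum_x sigma w x) * (mun mu w * qk y * ubar uR w a).
  by rewrite mulr_suml; apply: eq_bigr => x _; ring.
by case: (hs w) => _ ->; ring.
Qed.

Lemma payE sigma tau : sender_strategy sigma ->
  sender_payoff uS Q mu sigma tau = \sum_y qk y * G uS (tau y).
Proof.
move=> hs; rewrite /sender_payoff /G.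
under eq_bigr do rewrite exchange_big /=.
rewrite exchange_big /=; apply: eq_bigr => y _.
rewrite mulr_sumr; apply: eq_bigr => w _.
under eq_bigr do rewrite QkE.
have -> : \sum_x mun mu w * sigma w x * qk y * ubar uS w (tau y) =
          (\sum_x sigma w x) * (mun mu w * qk y * ubar uS w (tau y)).
  by rewrite mulr_suml; apply: eq_bigr => x _; ring.
by case: (hs w) => _ ->; ring.
Qed.

Definition ab (a : A) : bool := [forall a', expu uR mu a' <= expu uR mu a].

Lemma abP a : reflect (Astar uR mu a) (ab a).
Proof. exact: forallP. Qed.

Definition amax : A := [arg max_(a > a0) expu uR mu a]%O.
Lemma ab_amax : ab amax.
Proof.
rewrite /amax; case: (@arg_maxP _ _ A a0 predT (expu uR mu)) => //= i _ h.
by apply/forallP => a'; apply: h.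
Qed.

Definition amin : A := [arg min_(a < amax | ab a) expu uS mu a]%O.
Lemma amin_spec : ab amin /\ forall a, ab a -> expu uS mu amin <= expu uS mu a.
Proof.
rewrite /amin; case: (@arg_minP _ _ A amax ab (expu uS mu) ab_amax) => i hi h.
by split.
Qed.

Lemma uSstarE : uSstar uS uR mu = expu uS mu amin.
Proof.
case: amin_spec => h1 h2.
apply: inf_min; first by exists amin; split => //; apply/abP.
by move=> y [a [/abP ha ->]]; apply: h2.
Qed.

Lemma avg_const (c : R) : n%:R^-1 * \sum_(t < n) c = c.
Proof.
rewrite sumr_const card_ord -[c *+ n]mulr_natl mulrA mulVf ?mul1r //.
by rewrite pnatr_eq0 -lt0n.
Qed.

Lemma inner (sigma : {ffun 'I_n -> Om} -> {ffun 'I_k -> X} -> R) : sender_strategy sigma ->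
  inf [set z | exists tau, BR uR Q mu sigma tau /\
                z = sender_payoff uS Q mu sigma tau] = expu uS mu amin.
Proof.
move=> hs; case: amin_spec => h1 h2.
have ninv : 0 < n%:R^-1 :> R by rewrite invr_gt0 ltr0n.
apply: inf_min.
  exists (fun _ => [ffun _ => amin]); split.
    move=> y a'; rewrite !recvE //; apply: ler_wpM2l; first exact: qk_ge0.
    rewrite !GE; apply: ler_wpM2l; first exact: ltW.
    apply: ler_sum => t _; rewrite ffunE; exact: (abP _ h1).
  rewrite payE //.
  under eq_bigr do rewrite GE.
  under eq_bigr do under eq_bigr do rewrite ffunE.
  under eq_bigr do rewrite avg_const.
  by rewrite -mulr_suml sum_qk mul1r.
move=> z [tau [hBR ->]]; rewrite payE //.
rewrite -[X in X <= _]mul1r -sum_qk mulr_suml; apply: ler_sum => y _.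
have [->|qn0] := eqVneq (qk y) 0; first by rewrite !mul0r.
have qp : 0 < qk y by rewrite lt_neqAle eq_sym qn0 qk_ge0.
rewrite ler_pM2l // GE -[X in X <= _](avg_const) ler_pM2l //.
apply: ler_sum => t _; apply: h2; apply/abP => b.
pose a' := [ffun s => if s == t then b else tau y s].
have := hBR y a'; rewrite !recvE // ler_pM2l // !GE ler_pM2l //.
rewrite (bigD1 t) //= [X in _ <= X](bigD1 t) //= /a' ffunE eqxx.
have -> : \sum_(i < n | i != t) expu uR mu ([ffun s => if s == t then b else tau y s] i)
        = \sum_(i < n | i != t) expu uR mu (tau y i).
  by apply: eq_bigr => i /negbTE hi; rewrite ffunE hi.
by rewrite lerD2r.
Qed.

Lemma U_eq : UstarS uS uR Q mu n k = expu uS mu amin.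
Proof.
rewrite /UstarS [X in sup X](_ : _ = [set expu uS mu amin]) ?sup1 //.
apply/seteqP; split => v /=.
  by move=> [sigma [hs ->]]; rewrite inner.
move=> ->.
pose sigma0 := fun (w : {ffun 'I_n -> Om}) (x : {ffun 'I_k -> X}) =>
  ((x == [ffun _ => x0])%:R : R).
have hs : sender_strategy sigma0.
  by move=> w; split; [move=> x; rewrite ler0n | apply: sum_ind].
by exists sigma0; split => //; rewrite inner.
Qed.

End C.

End Helpers.
Import Helpers.

Theorem lemma2 (R : realType) (Om A X Y : finType) (a0 : A) (x0 : X)
    (mu : Om -> R) (uS uR : Om -> A -> R) (Q : X -> Y -> R)
    (hmu : is_dist mu) (hQ : forall x, is_dist (Q x))
    (hC : capacity Q = 0) (n k : nat) (hn : (0 < n)%N) (hk : (0 < k)%N) :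
  UstarS uS uR Q mu n k = Vval uS uR mu (k%:R / n%:R * capacity Q) /\
  Vval uS uR mu (k%:R / n%:R * capacity Q) = uSstar uS uR mu.
Proof.
have hc := chan_const hQ hC.
rewrite hC mulr0 V_eq //; split => //.

rewrite (U_eq uS uR k x0 a0 hmu hQ hc hn).
by rewrite (uSstarE uS uR mu a0).
Qed.
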